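(* Let $X$ and $Z$ be $T_1$-spaces with $\mathcal{D}(X)=\mathcal{D}(Z)$. Then $i(X)=i(Z)$. In particular, if $X$ is a $T_1$-space and no card of $X$ has an isolated point, then $X$ has no isolated point.
   Context: $i(X)$ denotes the cardinal number of isolated points of $X$. For a topological space $X$ and $x \in X$, the set $X\setminus\{x\}$ carries the subspace topology. A card of $X$ is a space homeomorphic to $X \setminus \{x\}$ for some $x \in X$. The deck of $X$ is $\mathcal{D}(X)=\{[X\setminus\{x\}]_\sim : x \in X\}$, where $[Y]_\sim$ denotes the homeomorphism class of $Y$. *)

(* Defs.v *)
From Stdlib Require Import Classical.

(* A topology on a type T, given by its family of open sets. The empty set
   is open as the union of the empty family. *)
Record topology (T : Type) := Topology {
  open : (T -> Prop) -> Prop;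
  open_full : open (fun _ => True);
  open_union : forall F : (T -> Prop) -> Prop,
      (forall U, F U -> open U) -> open (fun x => exists U, F U /\ U x);
  open_inter : forall U V, open U -> open V -> open (fun x => U x /\ V x)
}.
Arguments open {T} t U.

Definition T1 {T : Type} (t : topology T) : Prop :=
  forall x y : T, x <> y -> exists U, open t U /\ U x /\ ~ U y.

Definition subspace_open {T : Type} (t : topology T) (P : T -> Prop)
  (U : {x : T | P x} -> Prop) : Prop :=
  exists V, open t V /\ forall y, U y <-> V (proj1_sig y).

Lemma subspace_open_full {T} (t : topology T) P :
  subspace_open t P (fun _ => True).
Proof. exists (fun _ => True); split; [apply open_full | tauto]. Qed.

Lemma subspace_open_union {T} (t : topology T) P
  (F : ({x | P x} -> Prop) -> Prop) :
  (forall U, F U -> subspace_open t P U) ->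
  subspace_open t P (fun x => exists U, F U /\ U x).
Proof.
  intros HF.
  exists (fun x => exists W, (fun W => exists U, F U /\ open t W /\
            forall y, U y <-> W (proj1_sig y)) W /\ W x).
  split.
  - apply open_union. intros W [U [_ [HW _]]]; exact HW.
  - intros y; split.
    + intros [U [HU Uy]]. destruct (HF U HU) as [W [HW HUW]].
      exists W; split; [exists U; auto | apply HUW; exact Uy].
    + intros [W [[U [HU [_ HUW]]] Wy]]. exists U; split; [exact HU|apply HUW; exact Wy].
Qed.

Lemma subspace_open_inter {T} (t : topology T) P U V :
  subspace_open t P U -> subspace_open t P V ->
  subspace_open t P (fun x => U x /\ V x).
Proof.
  intros [U' [HU HUU]] [V' [HV HVV]].
  exists (fun x => U' x /\ V' x); split; [apply open_inter; auto|].
  intros y; rewrite HUU, HVV; tauto.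
Qed.

Definition subspace {T : Type} (t : topology T) (P : T -> Prop)
  : topology {x : T | P x} :=
  @Topology _ (subspace_open t P) (subspace_open_full t P)
    (subspace_open_union t P) (subspace_open_inter t P).

Definition continuous {A B : Type} (tA : topology A) (tB : topology B)
  (f : A -> B) : Prop :=
  forall V, open tB V -> open tA (fun a => V (f a)).

Definition homeomorphic {A B : Type} (tA : topology A) (tB : topology B)
  : Prop :=
  exists (f : A -> B) (g : B -> A),
    (forall a, g (f a) = a) /\ (forall b, f (g b) = b) /\
    continuous tA tB f /\ continuous tB tA g.

Definition card_space {T : Type} (t : topology T) (x : T)
  : topology {y : T | y <> x} := subspace t (fun y => y <> x).

(* D(X) = D(Z): the sets of homeomorphism classes of cards coincide. *)
Definition same_deck {X Z : Type} (tX : topology X) (tZ : topology Z)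
  : Prop :=
  (forall x : X, exists z : Z, homeomorphic (card_space tX x) (card_space tZ z)) /\
  (forall z : Z, exists x : X, homeomorphic (card_space tX x) (card_space tZ z)).

Definition isolated {T : Type} (t : topology T) (x : T) : Prop :=
  open t (fun y => y = x).

Definition equinumerous (A B : Type) : Prop :=
  exists (f : A -> B) (g : B -> A),
    (forall a, g (f a) = a) /\ (forall b, f (g b) = b).

Definition same_num_isolated {X Z : Type} (tX : topology X) (tZ : topology Z)
  : Prop :=
  equinumerous {x : X | isolated tX x} {z : Z | isolated tZ z}.

(* Main.v *)
Require Import Defs.
From Stdlib Require Import Classical ClassicalEpsilon FunctionalExtensionality PropExtensionality ProofIrrelevance.

Lemma open_ext {T} (t : topology T) (P Q : T -> Prop) :
  (forall a, P a <-> Q a) -> open t P -> open t Q.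
Proof.
  intros H HP. assert (E : P = Q).
  { apply functional_extensionality; intro a; apply propositional_extensionality; apply H. }
  now rewrite <- E.
Qed.

Lemma sig_eq {T} {P : T -> Prop} (a b : {x | P x}) : proj1_sig a = proj1_sig b -> a = b.
Proof. destruct a as [a ha], b as [b hb]; simpl; intros ->; f_equal; apply proof_irrelevance. Qed.

Lemma sub_iso {T} (t : topology T) (x : T) (y : {y | y <> x}) :
  isolated t (proj1_sig y) -> isolated (card_space t x) y.
Proof.
  intros H. hnf. cbn. exists (fun w => w = proj1_sig y). split; [exact H|].
  intros w; split; [intros ->; reflexivity | apply sig_eq].
Qed.

Lemma iso_sub {T} (t : topology T) (x : T) (y : {y | y <> x}) :
  T1 t -> isolated (card_space t x) y -> isolated t (proj1_sig y).
Proof.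
  intros HT H. hnf in H. cbn in H. destruct H as [V [HV HVe]].
  destruct y as [y0 hy]; simpl in *.
  destruct (HT y0 x hy) as [U [HU [Uy Ux]]].
  apply (open_ext t (fun w => V w /\ U w)); [| apply open_inter; auto].
  intros w; split.
  - intros [Vw Uw]. assert (hw : w <> x) by (intros ->; contradiction).
    pose proof (proj2 (HVe (exist _ w hw)) Vw) as E.
    apply (f_equal (@proj1_sig _ _)) in E. exact E.
  - intros ->. split; [apply (HVe (exist _ y0 hy)); reflexivity | exact Uy].
Qed.

Lemma homeo_iso {A B} (tA : topology A) (tB : topology B) f g :
  (forall a, g (f a) = a) -> (forall b, f (g b) = b) -> continuous tB tA g ->
  forall a, isolated tA a -> isolated tB (f a).
Proof.
  intros gf fg Hg a Ha. unfold isolated in *.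
  apply (open_ext tB (fun b => g b = a)); [|apply (Hg _ Ha)].
  intros b; split; [intros <-; now rewrite fg | intros ->; apply gf].
Qed.

Definition inj (A B : Type) := exists f : A -> B, forall a a', f a = f a' -> a = a'.

Lemma card_inj {X Z} (tX : topology X) (tZ : topology Z) x z :
  T1 tZ -> homeomorphic (card_space tX x) (card_space tZ z) ->
  (isolated tX x -> isolated tZ z) ->
  inj {y | isolated tX y} {w | isolated tZ w}.
Proof.
  intros HT [f [g [gf [fg [Hf Hg]]]]] Hxz.
  exists (fun a => match excluded_middle_informative (proj1_sig a = x) with
    | left e => exist _ z (Hxz (eq_ind (proj1_sig a) (isolated tX) (proj2_sig a) x e))
    | right n => exist _ (proj1_sig (f (exist _ (proj1_sig a) n)))
        (iso_sub tZ z _ HT (homeo_iso _ _ f g gf fg Hg _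
            (sub_iso tX x (exist _ (proj1_sig a) n) (proj2_sig a))))
    end).
  intros a a'. cbv beta.
  destruct (excluded_middle_informative (proj1_sig a = x)) as [e|n],
    (excluded_middle_informative (proj1_sig a' = x)) as [e'|n']; intro E;
    apply (f_equal (@proj1_sig _ _)) in E; simpl in E.
  - apply sig_eq; congruence.
  - exfalso. exact (proj2_sig (f (exist _ (proj1_sig a') n')) (eq_sym E)).
  - exfalso. exact (proj2_sig (f (exist _ (proj1_sig a) n)) E).
  - apply sig_eq in E. apply (f_equal g) in E. rewrite !gf in E.
    apply (f_equal (@proj1_sig _ _)) in E. simpl in E. apply sig_eq; exact E.
Qed.

Lemma injXZ {X Z} (tX : topology X) (tZ : topology Z) :
  T1 tX -> T1 tZ -> same_deck tX tZ -> inj {x | isolated tX x} {z | isolated tZ z}.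
Proof.
  intros TX TZ [D1 D2].
  destruct (classic (exists x, ~ isolated tX x)) as [[x nx]|Hall].
  - destruct (D1 x) as [z Hz]. eapply card_inj; eauto. intro; contradiction.
  - assert (Hd : forall x, isolated tX x) by (intro x; apply NNPP; intro; apply Hall; eauto).
    destruct (classic (inhabited X)) as [[x0]|NX].
    2: { exists (fun a => match NX (inhabits (proj1_sig a)) with end).
         intros a; exfalso; apply NX; constructor; exact (proj1_sig a). }
    destruct (D1 x0) as [z0 Hz0].
    destruct (classic (isolated tZ z0)) as [iz|niz].
    + eapply card_inj; eauto.
    + exfalso. apply niz.
      assert (key : forall x z, homeomorphic (card_space tX x) (card_space tZ z) ->
                forall w, w <> z -> isolated tZ w).
      { intros x z [f [g [gf [fg [Hf Hg]]]]] w hw.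
        pose (w' := exist (fun y => y <> z) w hw).
        apply (iso_sub tZ z w' TZ).
        rewrite <- (fg w'). apply (homeo_iso _ _ f g gf fg Hg). apply sub_iso. apply Hd. }
      destruct (classic (exists z1, z1 <> z0)) as [[z1 hz1]|Hno].
      * destruct (D2 z1) as [x1 Hx1]. apply (key x1 z1 Hx1). intro; apply hz1; auto.
      * apply (open_ext tZ (fun _ => True)); [|apply open_full].
        intros w; split; [intros _; apply NNPP; intro; apply Hno; eauto | auto].
Qed.

Fixpoint Cn {A B} (f : A -> B) (g : B -> A) (n : nat) (a : A) : Prop :=
  match n with
  | 0 => ~ exists b, g b = a
  | S m => exists c, Cn f g m c /\ g (f c) = a
  end.
Definition CC {A B} (f : A -> B) (g : B -> A) a := exists n, Cn f g n a.
Lemma notC_img {A B} (f : A -> B) (g : B -> A) a : ~ CC f g a -> exists b, g b = a.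
Proof. intros nc; apply NNPP; intro H; apply nc; exists 0; exact H. Qed.
Definition hh {A B} (f : A -> B) (g : B -> A) (a : A) : B :=
  match excluded_middle_informative (CC f g a) with
  | left _ => f a
  | right nc => proj1_sig (constructive_indefinite_description _ (notC_img f g a nc))
  end.
Definition kk {A B} (f : A -> B) (g : B -> A) (b : B) : A :=
  match excluded_middle_informative (exists a, CC f g a /\ f a = b) with
  | left ex => proj1_sig (constructive_indefinite_description _ ex)
  | right _ => g b
  end.

Lemma SB {A B} (f : A -> B) (g : B -> A) :
  (forall a a', f a = f a' -> a = a') -> (forall b b', g b = g b' -> b = b') ->
  equinumerous A B.
Proof.
  intros fi gi. exists (hh f g), (kk f g). split.
  - intros a. unfold hh. destruct (excluded_middle_informative (CC f g a)) as [ca|nca].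
    + unfold kk. destruct (excluded_middle_informative (exists a', CC f g a' /\ f a' = f a)) as [ex|nex].
      * destruct (constructive_indefinite_description _ ex) as [a' [ca0 E]]; simpl. apply fi; auto.
      * exfalso; apply nex; eauto.
    + destruct (constructive_indefinite_description _ (notC_img f g a nca)) as [b E]; simpl.
      unfold kk. destruct (excluded_middle_informative (exists a', CC f g a' /\ f a' = b)) as [ex|nex].
      * exfalso. destruct ex as [a' [[n ca'] E']]. apply nca. exists (S n), a'.
        split; [exact ca'|]. rewrite E'; exact E.
      * exact E.
  - intros b. unfold kk. destruct (excluded_middle_informative (exists a, CC f g a /\ f a = b)) as [ex|nex].
    + destruct (constructive_indefinite_description _ ex) as [a [ca E]]; simpl. unfold hh.
      destruct (excluded_middle_informative (CC f g a)) as [_|nca]; [exact E|contradiction].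
    + unfold hh. destruct (excluded_middle_informative (CC f g (g b))) as [[n cn]|ncg].
      * exfalso. destruct n as [|m]; simpl in cn.
        -- apply cn; eauto.
        -- destruct cn as [c [cc E]]. apply gi in E. apply nex; exists c; split; [exists m; auto|auto].
      * destruct (constructive_indefinite_description _ (notC_img f g (g b) ncg)) as [b' E]; simpl.
        apply gi; exact E.
Qed.

Lemma homeo_sym {A B} (tA : topology A) (tB : topology B) :
  homeomorphic tA tB -> homeomorphic tB tA.
Proof. intros [f [g [h1 [h2 [h3 h4]]]]]. exists g, f; auto. Qed.

Theorem theorem4p3 :
  (forall (X Z : Type) (tX : topology X) (tZ : topology Z),
      T1 tX -> T1 tZ -> same_deck tX tZ -> same_num_isolated tX tZ) /\
  (forall (X : Type) (tX : topology X),
      T1 tX ->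
      (exists x1 x2 : X, x1 <> x2) ->
      (forall (x : X) (y : {y : X | y <> x}), ~ isolated (card_space tX x) y) ->
      forall x : X, ~ isolated tX x).
Proof.
  split.
  - intros X Z tX tZ TX TZ D.
    destruct (injXZ tX tZ TX TZ D) as [f fi].
    assert (D' : same_deck tZ tX).
    { destruct D as [D1 D2]. split.
      - intros z; destruct (D2 z) as [x H]; exists x; apply homeo_sym; exact H.
      - intros x; destruct (D1 x) as [z H]; exists z; apply homeo_sym; exact H. }
    destruct (injXZ tZ tX TZ TX D') as [g gi].
    exact (SB f g fi gi).
  - intros X tX _ [x1 [x2 h12]] H x Hx.
    destruct (classic (x1 = x)) as [e|n].
    + apply (H x2 (exist _ x (fun E => h12 (eq_trans e E)))). apply sub_iso; exact Hx.
    + apply (H x1 (exist _ x (fun E => n (eq_sym E)))). apply sub_iso; exact Hx.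
Qed.
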